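(* Let $G$ be a connected graph. The following are equivalent: (1) $G$ is a tree; (2) any two $\mathbb{T}$-gain graphs on $G$ are $\mathbb{T}$-cospectral; (3) the adjacency matrices of any two $\mathbb{T}$-gain graphs on $G$ have the same spectral radius.
   Context: Graphs are finite, simple and undirected. $\mathbb{T}=\{z\in\mathbb{C}:|z|=1\}$. A $\mathbb{T}$-gain on $G$ is a map $\varphi$ from oriented edges $\overrightarrow{e_{st}}$ of $G$ to $\mathbb{T}$ with $\varphi(\overrightarrow{e_{ts}})=\varphi(\overrightarrow{e_{st}})^{-1}$; $\Phi=(G,\varphi)$ is a $\mathbb{T}$-gain graph, and its adjacency matrix $A(\Phi)$ is the Hermitian matrix with $(s,t)$ entry $\varphi(\overrightarrow{e_{st}})$ if $v_s\sim v_t$, else $0$. $\mathbb{T}$-cospectral means the adjacency matrices have the same spectrum. *)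

(* Defs.v *)
From HB Require Import structures.
From mathcomp Require Import all_boot all_order all_algebra.
From mathcomp Require Import reals.
From mathcomp Require Import complex.
Set Implicit Arguments. Unset Strict Implicit. Unset Printing Implicit Defensive.
Import Order.TTheory GRing.Theory Num.Theory.
Local Open Scope ring_scope.

Definition simple_graph (n : nat) (e : rel 'I_n) : Prop :=
  symmetric e /\ irreflexive e.

Definition connected_graph (n : nat) (e : rel 'I_n) : Prop :=
  (0 < n)%N /\ forall i j : 'I_n, connect e i j.

Definition has_cycle (n : nat) (e : rel 'I_n) : Prop :=
  exists c : seq 'I_n, (2 < size c)%N /\ cycle e c /\ uniq c.

Definition is_tree (n : nat) (e : rel 'I_n) : Prop :=
  connected_graph e /\ ~ has_cycle e.

(* A T-gain on the graph: phi s t is the gain of the oriented edge s -> t,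
   unimodular, with phi t s = (phi s t)^-1.  Values on non-edges are irrelevant. *)
Definition is_T_gain (R : rcfType) (n : nat) (e : rel 'I_n)
    (phi : 'I_n -> 'I_n -> R[i]) : Prop :=
  forall s t : 'I_n, e s t -> `|phi s t| = 1 /\ phi t s = (phi s t)^-1.

Definition gain_adj (R : rcfType) (n : nat) (e : rel 'I_n)
    (phi : 'I_n -> 'I_n -> R[i]) : 'M[R[i]]_n :=
  \matrix_(s, t) (if e s t then phi s t else 0).

Definition cospectral (R : rcfType) (n : nat) (A B : 'M[R[i]]_n) : Prop :=
  forall z : R[i], mup z (char_poly A) = mup z (char_poly B).

Definition is_spectral_radius (R : rcfType) (n : nat) (A : 'M[R[i]]_n) (r : R[i]) : Prop :=
  (exists2 z, eigenvalue A z & `|z| = r) /\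
  (forall z, eigenvalue A z -> `|z| <= r).

(* Main.v *)
Require Import Defs.
From HB Require Import structures.
From mathcomp Require Import all_boot all_order all_algebra.
From mathcomp Require Import reals.
From mathcomp Require Import complex.
From mathcomp Require Import zify ring.
Set Implicit Arguments. Unset Strict Implicit. Unset Printing Implicit Defensive.
Import Order.TTheory GRing.Theory Num.Theory.
Local Open Scope ring_scope.

Fixpoint wgain (F : fieldType) (T : Type) (phi : T -> T -> F) (a : T) (p : seq T) : F :=
  match p with [::] => 1 | b :: p' => phi a b * wgain phi b p' end.

Lemma wgain_cat (F : fieldType) (T : Type) (phi : T -> T -> F) a p q :
  wgain phi a (p ++ q) = wgain phi a p * wgain phi (last a p) q.
Proof. by elim: p a => [|b p IH] a /=; rewrite ?mul1r // IH mulrA. Qed.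

Lemma last_rev_head (T : Type) (x : T) s : last x (rev s) = head x s.
Proof. by case: s => [|y s] //; rewrite rev_cons last_rcons. Qed.

Lemma wgain_rev (F : fieldType) (T : Type) (e : rel T) (phi : T -> T -> F) :
  (forall s t, e s t -> phi t s = (phi s t)^-1) ->
  forall a p, path e a p ->
  wgain phi (last a p) (rev (belast a p)) = (wgain phi a p)^-1.
Proof.
move=> hinv a p; elim: p a => [|b p IH] a /=; first by rewrite invr1.
move=> /andP[eab hp]; rewrite rev_cons -cats1 wgain_cat IH //= mulr1.
have -> : last (last b p) (rev (belast b p)) = b.
  by rewrite last_rev_head; case: p {IH hp}.
by rewrite hinv // invfM mulrC.
Qed.

Lemma not_uniq_split (T : eqType) (s : seq T) :
  ~~ uniq s -> exists p1 x p2 p3, s = p1 ++ x :: p2 ++ x :: p3.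
Proof.
elim: s => [|y s IH] //=; rewrite negb_and negbK => /orP[ys|/IH[p1 [x [p2 [p3 ->]]]]].
  case/splitPr: ys => p2 p3; by exists [::], y, p2, p3.
by exists (y :: p1), x, p2, p3.
Qed.

Lemma wgain_neq0 (F : fieldType) (T : Type) (e : rel T) (phi : T -> T -> F) :
  (forall s t, e s t -> phi s t != 0) ->
  forall a p, path e a p -> wgain phi a p != 0.
Proof.
move=> h a p; elim: p a => [|b p IH] a /=; first by rewrite oner_eq0.
by move=> /andP[eab hp]; rewrite mulf_neq0 ?h ?IH.
Qed.

Lemma closed_walk_gain (n : nat) (e : rel 'I_n) (F : fieldType) (phi : 'I_n -> 'I_n -> F) :
  irreflexive e -> ~ has_cycle e ->
  (forall s t, e s t -> phi s t != 0) ->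
  (forall s t, e s t -> phi t s = (phi s t)^-1) ->
  forall p a, path e a p -> last a p = a -> wgain phi a p = 1.
Proof.
move=> irr nocyc nz hinv p; have [k] := ubnP (size p); elim: k p => [//|k IH] p.
rewrite ltnS => szp a hp hl.
have [up|nup] := boolP (uniq p).
  case: p szp hp hl up => [|b [|c [|d q]]] //= szp.
  - by move=> /andP[eab _] /= hba; move: eab; rewrite hba irr.
  - move=> /and3P[eab ebc _] hca _; rewrite mulr1 -hca hinv //.
    by rewrite mulVf // nz.
  - move=> hp hl up; exfalso; apply: nocyc; exists [:: b, c, d & q]; split => //.
    by split=> //; rewrite (cycle_path a) /= hl.
case: (not_uniq_split nup) => p1 [x [p2 [p3 def_p]]].
move: hp hl szp; rewrite def_p => hp hl szp.
have -> : p1 ++ x :: p2 ++ x :: p3 = (p1 ++ [:: x]) ++ (rcons p2 x ++ p3).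
  by rewrite -catA /= cat_rcons.
rewrite wgain_cat [wgain _ _ (rcons p2 x ++ p3)]wgain_cat last_cat /= last_rcons.
have hp' := hp; rewrite cat_path /= -cat_rcons cat_path last_rcons in hp'.
case/and4P: hp' => hp1 ex hp2 hp3.
have sz1 : (size (p1 ++ x :: p3) < k)%N.
  by move: szp; rewrite !size_cat /= size_cat /=; lia.
have sz2 : (size (rcons p2 x) < k)%N.
  by move: szp; rewrite !size_cat /= size_cat size_rcons /=; lia.
have c2 : wgain phi x (rcons p2 x) = 1.
  by apply: IH => //; rewrite last_rcons.
have c1 : wgain phi a (p1 ++ x :: p3) = 1.
  apply: IH => //; first by rewrite cat_path /= ex hp1 hp3.
  by move: hl; rewrite !last_cat /= last_cat.
by rewrite c2 mul1r -c1 !wgain_cat /= mulr1 -mulrA.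
Qed.

Lemma tree_switch (n : nat) (e : rel 'I_n) (F : fieldType) (phi : 'I_n -> 'I_n -> F) :
  symmetric e -> irreflexive e -> ~ has_cycle e ->
  (0 < n)%N -> (forall i j, connect e i j) ->
  (forall s t, e s t -> phi s t != 0) ->
  (forall s t, e s t -> phi t s = (phi s t)^-1) ->
  exists d : 'I_n -> F, (forall i, d i != 0) /\
     forall s t, e s t -> phi s t = (d s)^-1 * d t.
Proof.
move=> sym irr nocyc n0 conn nz hinv.
pose r := Ordinal n0.
have hw : forall v, exists p, path e r p && (last r p == v).
  by move=> v; case/connectP: (conn r v) => p hp ->; exists p; rewrite hp eqxx.
pose w v := xchoose (hw v).
have wP v : path e r (w v) by case/andP: (xchooseP (hw v)).
have wL v : last r (w v) = v by case/andP: (xchooseP (hw v)) => _ /eqP.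
pose d v := wgain phi r (w v).
have dnz v : d v != 0 by apply: (wgain_neq0 nz); apply: wP.
exists d; split => // s t est.
have key : wgain phi r (w s ++ t :: rev (belast r (w t))) = 1.
  apply: (closed_walk_gain irr nocyc nz hinv).
    rewrite cat_path wP /= wL est /=.
    have := rev_path e r (w t); rewrite wL => ->.
    by rewrite (eq_path (e' := e)) ?wP // => x y; rewrite sym.
  rewrite last_cat /= last_rev_head.
  by have := wL t; case: (w t) => [|z q] /=.
move: key; rewrite wgain_cat wL /=.
have := wgain_rev hinv (wP t); rewrite wL => ->.
rewrite -/(d s) -/(d t) mulrA => h.
have : d s * phi s t = d t by apply: (mulIf (invr_neq0 (dnz t))); rewrite h divff.
by move=> <-; rewrite mulrA mulVf // mul1r.
Qed.

Lemma char_poly_diag_conj (F : fieldType) n (A B : 'M[F]_n) (d : 'I_n -> F) :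
  (forall i, d i != 0) -> (forall s t, B s t = (d s)^-1 * A s t * d t) ->
  char_poly B = char_poly A.
Proof.
move=> dnz hB.
have E : char_poly_mx B = diag_mx (\row_i ((d i)^-1)%:P) *m char_poly_mx A
                          *m diag_mx (\row_i (d i)%:P).
  apply/matrixP => s t; rewrite mul_mx_diag mul_diag_mx !mxE hB.
  have [<-|nst] := eqVneq s t.
    rewrite !mulr1n [(_ * A s s * _)]mulrAC mulVf // mul1r.
    by rewrite mulrAC -polyCM mulVf // polyC1 mul1r.
  have -> : 'X *+ false = 0 :> {poly F} by [].
  by rewrite !sub0r mulrN mulNr -!polyCM.
rewrite /char_poly E !det_mulmx !det_diag mulrC mulrA -big_split /=.
rewrite big1 ?mul1r // => i _; by rewrite !mxE -polyCM divff.
Qed.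

Local Open Scope sesquilinear_scope.

Lemma diag_eigen (C : numClosedFieldType) n (A P : 'M[C]_n) (mu : 'rV[C]_n) i :
  P \in unitmx -> A = invmx P *m diag_mx mu *m P -> eigenvalue A (mu 0 i).
Proof.
move=> Pu ->; apply/eigenvalueP; exists (delta_mx 0 i *m P).
  rewrite !mulmxA mulmxK //.
  have -> : (delta_mx 0 i : 'rV[C]_n) *m diag_mx mu = mu 0 i *: delta_mx 0 i.
    apply/matrixP => a j; rewrite mul_mx_diag !mxE.
    by case: (eqVneq j i) => [->|nji]; rewrite ?andbF ?mul0r ?mulr0 // mulrC.
  by rewrite -scalemxAl.
apply/negP => /eqP h; have := congr1 (mulmx^~ (invmx P)) h.
rewrite mulmxK // mul0mx => /matrixP/(_ 0 i); rewrite !mxE !eqxx /=.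
by move/eqP; rewrite oner_eq0.
Qed.

Lemma rayleigh_eq (C : numClosedFieldType) n (A : 'M[C]_n) (r : C) (v : 'rV[C]_n) :
  A \is hermsymmx -> (forall z, eigenvalue A z -> `|z| <= r) ->
  r * (v *m v ^t*) 0 0 <= (v *m A *m v ^t*) 0 0 -> v *m A = r *: v.
Proof.
move=> Ah Ab hle.
have Aeq := orthomx_spectralP (hermitian_normalmx Ah).
set P := spectralmx A in Aeq; set mu := spectral_diag A in Aeq.
have Punit : P \is unitarymx by apply: spectral_unitarymx.
have Pu : P \in unitmx by apply: unitarymx_unit.
have iP : invmx P = P ^t* by apply: invmx_unitary.
have mureal : forall j, mu 0 j \is Num.real.
  move=> j; have /mxOverP := hermitian_spectral_diag_real Ah; exact.
have mule : forall j, mu 0 j <= r.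
  move=> j; apply: le_trans (Ab _ (diag_eigen j Pu Aeq)).
  exact: real_ler_norm.
set w := v *m P ^t*.
have Ev : v = w *m P by rewrite /w -iP mulmxKV.
have Evt : v ^t* = P ^t* *m w ^t*.
  by rewrite Ev trmx_mul map_mxM.
have E1 : v *m v ^t* = w *m w ^t*.
  by rewrite Evt Ev !mulmxA -[w *m P *m _]mulmxA -iP mulmxV // mulmx1.
have E2 : v *m A *m v ^t* = w *m diag_mx mu *m w ^t*.
  rewrite Aeq Evt Ev iP !mulmxA.
  rewrite -[w *m P *m P^t*]mulmxA -iP mulmxV // mulmx1.
  by rewrite mulmxK.
move: hle; rewrite E1 E2 !mxE.
under [X in _ <= X]eq_bigr do rewrite mul_mx_diag mxE.
rewrite mulr_sumr -subr_ge0 -sumrB => hs.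
have term0 : forall j, (mu 0 j - r) * (w 0 j * (w ^t*) j 0) = 0.
  have nn : forall j, 0 <= (r - mu 0 j) * (w 0 j * (w ^t*) j 0).
    move=> j; rewrite !mxE mulr_ge0 ?subr_ge0 ?mule //.
    by rewrite -normCK exprn_ge0.
  have hs0 : \sum_j (r - mu 0 j) * (w 0 j * (w ^t*) j 0) = 0.
    apply/eqP; rewrite eq_le sumr_ge0 ?andbT; last by move=> j _; apply: nn.
    rewrite -oppr_ge0 -sumrN; apply: le_trans hs _; apply: ler_sum => j _.
    by rewrite [X in _ <= X](_ : _ = w 0 j * mu 0 j * (w ^t*) j 0 - r * (w 0 j * (w ^t*) j 0)) //; ring.
  move=> j; apply/eqP; rewrite -oppr_eq0 -mulNr opprB.
  by apply/eqP; apply: (psumr_eq0P (fun j _ => nn j) hs0).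
have Ew : w *m diag_mx mu = r *: w.
  apply/matrixP => a j; rewrite mul_mx_diag !mxE (ord1 a).
  have := term0 j; rewrite !mxE => /eqP; rewrite mulf_eq0 => /orP[/eqP h|].
    by move/eqP: h; rewrite subr_eq0 => /eqP ->; rewrite mulrC.
  by rewrite -normCK sqrf_eq0 normr_eq0 => /eqP ->; rewrite mulr0 mul0r.
by rewrite Aeq Ev !mulmxA mulmxK // Ew -scalemxAl.
Qed.

Lemma eig_mup (F : fieldType) n (A : 'M[F]_n) z :
  eigenvalue A z = (0 < mup z (char_poly A))%N.
Proof.
by rewrite eigenvalue_root_char mup_geq ?monic_neq0 ?char_poly_monic // expr1 dvdp_XsubCl.
Qed.

Lemma cospectral_radius (R : rcfType) n (A B : 'M[R[i]]_n) :
  cospectral A B -> forall r, is_spectral_radius A r <-> is_spectral_radius B r.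
Proof.
move=> hc r.
have E z : eigenvalue A z = eigenvalue B z.
  by rewrite (eig_mup A z) (eig_mup B z) (hc z).
split=> -[[z ez nz] hb]; split.
- by exists z; [rewrite -E; exact: ez | exact: nz].
- by move=> y; rewrite -E; apply: hb.
- by exists z; [rewrite E; exact: ez | exact: nz].
- by move=> y; rewrite E; apply: hb.
Qed.

Lemma max_norm_seq (C : numDomainType) (s : seq C) x0 :
  x0 \in s -> exists2 z, z \in s & forall y, y \in s -> `|y| <= `|z|.
Proof.
elim: s x0 => [//|a s IH] x0 _.
case: s IH => [|b s] IH.
  by exists a => [|y]; rewrite ?mem_head // inE => /eqP ->.
have [z zs hz] := IH b (mem_head b s).
have [le|le] := orP (real_leVge (normr_real a) (normr_real z)).
  exists z; first by rewrite in_cons zs orbT.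
  by move=> y; rewrite in_cons => /orP[/eqP ->|/hz].
exists a; first by rewrite mem_head.
by move=> y; rewrite in_cons => /orP[/eqP ->|/hz/le_trans]; [| apply].
Qed.

Lemma spec_radius_exists (R : rcfType) n (A : 'M[R[i]]_n) :
  (0 < n)%N -> exists r, is_spectral_radius A r.
Proof.
move=> n0; have [s hs] := closed_field_poly_normal (char_poly A).
have E z : eigenvalue A z = (z \in s).
  rewrite eigenvalue_root_char hs.
  have /monicP -> := char_poly_monic A.
  by rewrite scale1r root_prod_XsubC.
have [z0 ez0] := eigenvalue_closed A n0.
have z0s : z0 \in s by rewrite -E.
have [z zs hz] := @max_norm_seq _ s z0 z0s.
exists `|z|; split; first by exists z; rewrite ?E.
by move=> y; rewrite E; apply: hz.
Qed.

Lemma wgain_one (F : fieldType) (T : eqType) (phi : T -> T -> F) a l z :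
  (forall s, s \in a :: l -> forall t, phi s t = 1) -> wgain phi a (rcons l z) = 1.
Proof.
elim: l a => [|b l IH] a h /=; first by rewrite h ?mem_head // mulr1.
rewrite h ?mem_head // mul1r IH // => s hs; apply: h.
by rewrite in_cons hs orbT.
Qed.

Lemma cycle_gain_radius (R : rcfType) n (e : rel 'I_n) :
  symmetric e -> irreflexive e -> (forall i j, connect e i j) -> has_cycle e ->
  exists phi : 'I_n -> 'I_n -> R[i], is_T_gain e phi /\
    forall r, is_spectral_radius (gain_adj e (fun _ _ => 1)) r ->
              ~ is_spectral_radius (gain_adj e phi) r.
Proof.
move=> sym irr conn [c [szc [cyc uc]]].
case: c szc cyc uc => [|c0 [|c1 [|q1 q']]] // _ cyc uc.
have e01 : e c0 c1 by move: cyc; rewrite /cycle /= => /andP[].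
have hpath : path e c0 (c1 :: q1 :: rcons q' c0) by move: cyc; rewrite /cycle.
move: uc; rewrite /= !inE !negb_or => /andP[/and3P[c01 c0q1 c0q'] /andP[/andP[c1q1 c1q'] _]].
pose j : R[i] := 'i.
have nj : `|j| = 1 by apply: normCi.
have j0 : j != 0 by rewrite -normr_eq0 nj oner_eq0.
pose phi (s t : 'I_n) : R[i] :=
  if (s == c0) && (t == c1) then j else if (s == c1) && (t == c0) then j^-1 else 1.
have c10 : (c1 == c0) = false by rewrite eq_sym (negbTE c01).
have phiT : forall s t, `|phi s t| = 1 /\ phi t s = (phi s t)^-1.
  move=> s t; rewrite /phi.
  have hab : ~~ ((s == c0) && (s == c1)).
    by apply/negP => /andP[/eqP -> ]; rewrite (negbTE c01).
  have hcd : ~~ ((t == c0) && (t == c1)).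
    by apply/negP => /andP[/eqP -> ]; rewrite (negbTE c01).
  move: hab hcd.
  case: (s == c0); case: (s == c1); case: (t == c0); case: (t == c1) => //= _ _.
  all: try by split; rewrite ?normfV ?nj ?invrK ?invr1 ?normr1.
  all: try by split; rewrite ?normfV ?nj ?invrK ?invr1 ?normr1.
exists phi; split; first by move=> s t _; apply: phiT.
move=> r hr1 [[lam elam nlam] _].
set A := gain_adj e phi; set A1 := gain_adj e (fun _ _ => (1 : R[i])).
have A1E s t : A1 s t = if e s t then 1 else 0 by rewrite /A1 mxE.
have AE s t : A s t = if e s t then phi s t else 0 by rewrite /A mxE.
have normA s t : `|A s t| = A1 s t.
  by rewrite AE A1E; case: (e s t); rewrite ?normr0 //; case: (phiT s t).
have A1ge0 s t : 0 <= A1 s t by rewrite A1E; case: (e s t); rewrite ?ler01 ?lexx.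
case/eigenvalueP: elam => x hx xnz.
have hxt t : \sum_s x 0 s * A s t = lam * x 0 t.
  by have := congr1 (fun M : 'rV[R[i]]_n => M 0 t) hx; rewrite !mxE.
pose y := \row_t `|x 0 t|.
have yE t : y 0 t = `|x 0 t| by rewrite mxE.
have yge0 t : 0 <= y 0 t by rewrite yE normr_ge0.
have yA1E t : (y *m A1) 0 t = \sum_s y 0 s * A1 s t by rewrite mxE.
have claim1 t : r * y 0 t <= (y *m A1) 0 t.
  rewrite yA1E yE -nlam -normrM -hxt; apply: le_trans (ler_norm_sum _ _ _) _.
  by apply: ler_sum => s _; rewrite normrM normA yE.
have A1h : A1 \is hermsymmx.
  apply/is_hermitianmxP; apply/matrixP => s t.
  rewrite expr0 scale1r !mxE (sym t s).
  by case: (e s t); rewrite ?conjC1 ?conjC0.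
have yA1 : y *m A1 = r *: y.
  apply: rayleigh_eq => //; first by case: hr1.
  rewrite !mxE mulr_sumr; apply: ler_sum => t _.
  rewrite !mxE geC0_conj ?yge0 // mulrA ler_wpM2r //.
  by have := claim1 t; rewrite !mxE.
have yA1t t : \sum_s y 0 s * A1 s t = r * y 0 t.
  by rewrite -yA1E yA1 mxE.
have zc s t : e s t -> y 0 t = 0 -> y 0 s = 0.
  move=> est yt0; have := yA1t t; rewrite yt0 mulr0 => hs.
  have := psumr_eq0P (fun i _ => mulr_ge0 (yge0 i) (A1ge0 i t)) hs (isT : xpredT s).
  by move/(_ s); rewrite A1E est mulr1.
have ynz t : y 0 t != 0.
  apply/negP => /eqP yt0.
  have all0 : forall t0, y 0 t0 = 0.
    move=> t0; pose a := [pred v | y 0 v == 0].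
    have ca : closed e a.
      move=> u v euv; rewrite !inE; apply/eqP/eqP.
        by apply: zc; rewrite sym.
      exact: zc.
    by apply/eqP; have := closed_connect ca (conn t t0); rewrite !inE yt0 eqxx => <-.
  apply: (negP xnz); apply/eqP/rowP => t0; rewrite mxE.
  by apply/eqP; rewrite -normr_eq0 -yE all0.
have r0 : r != 0.
  apply/negP => /eqP r0; have := yA1t c1; rewrite r0 mul0r => hs.
  have := psumr_eq0P (fun i _ => mulr_ge0 (yge0 i) (A1ge0 i c1)) hs (isT : xpredT c0).
  by move/(_ c0); rewrite A1E e01 mulr1; apply/eqP.
pose u s := x 0 s / y 0 s.
pose om := lam / r.
have unz s : u s != 0 by rewrite mulf_neq0 ?invr_eq0 // -normr_eq0 -yE.
have hrel s t : e s t -> u s * phi s t = om * u t.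
  move=> est.
  have heq : `|\sum_s x 0 s * A s t| = \sum_s `|x 0 s * A s t|.
    rewrite hxt normrM nlam -yE -yA1t.
    by apply: eq_bigr => i _; rewrite normrM normA yE.
  have [tau _ htau] := normC_sum_eq heq.
  have hsum : lam * x 0 t = r * y 0 t * tau.
    rewrite -hxt -yA1t mulr_suml; apply: eq_bigr => i _.
    by rewrite htau // normrM normA -yE.
  have hs := htau s isT; rewrite normrM normA -yE AE A1E est mulr1 in hs.
  have ys := ynz s; have yt := ynz t.
  have htau' : tau = lam * x 0 t / (r * y 0 t).
    by rewrite hsum; field; rewrite yt r0.
  rewrite htau' in hs.
  rewrite /u /om -[x 0 s / y 0 s * phi s t]mulrAC hs.
  by field; rewrite yt r0 ys.
have tele : forall a p, path e a p -> u a * wgain phi a p = om ^+ size p * u (last a p).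
  move=> a p; elim: p a => [|b p IH] a /=; first by rewrite mulr1 expr0 mul1r.
  by move=> /andP[eab hp]; rewrite mulrA hrel // -mulrA IH // exprS mulrA.
have om2 : om ^+ 2 = 1.
  have hp2 : path e c0 [:: c1; c0] by rewrite /= e01 sym e01.
  have := tele _ _ hp2; rewrite /= /phi !eqxx c10 /= mulr1 mulfV // mulr1.
  by move=> h; apply: (mulIf (unz c0)); rewrite mul1r -h.
have W : wgain phi c0 [:: c1, q1 & rcons q' c0] = j.
  rewrite /= wgain_one; last first.
    move=> s; rewrite in_cons => /orP[/eqP ->|sq] t; rewrite /phi.
      by rewrite (eq_sym q1) (negbTE c0q1) (eq_sym q1) (negbTE c1q1).
    have -> : (s == c0) = false by apply/negP => /eqP h; move: c0q'; rewrite -h sq.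
    have -> : (s == c1) = false by apply/negP => /eqP h; move: c1q'; rewrite -h sq.
    by [].
  rewrite /phi !eqxx /= mulr1.
  by rewrite c10 /= (eq_sym q1) (negbTE c0q1) mulr1.
have cyc_gain := tele _ _ hpath.
rewrite W /= last_rcons mulrC in cyc_gain; move/(mulIf (unz c0)): cyc_gain => hj.
have : j ^+ 2 = 1 by rewrite hj -exprM mulnC exprM om2 expr1n.
rewrite /j sqrCi => /eqP; rewrite -subr_eq0 -opprD oppr_eq0.
by rewrite (_ : 1 + 1 = 2%:R) // pnatr_eq0.
Qed.

Lemma one_gain (R : rcfType) n (e : rel 'I_n) : is_T_gain e (fun _ _ => (1 : R[i])).
Proof. by move=> s t _; rewrite normr1 invr1. Qed.

Lemma tree_charpoly (R : rcfType) n (e : rel 'I_n) (phi : 'I_n -> 'I_n -> R[i]) :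
  simple_graph e -> is_tree e -> is_T_gain e phi ->
  char_poly (gain_adj e phi) = char_poly (gain_adj e (fun _ _ => 1)).
Proof.
move=> [sym irr] [[n0 conn] nocyc] g.
have nz s t : e s t -> phi s t != 0.
  by move=> est; case: (g s t est) => h _; rewrite -normr_eq0 h oner_eq0.
have hinv s t : e s t -> phi t s = (phi s t)^-1 by move=> est; case: (g s t est).
have [d [dnz hd]] := tree_switch sym irr nocyc n0 conn nz hinv.
apply: (char_poly_diag_conj dnz) => s t; rewrite !mxE.
by case E: (e s t); rewrite ?mulr0 ?mul0r // mulr1 hd.
Qed.

Lemma tree_cospec (R : rcfType) n (e : rel 'I_n) (phi psi : 'I_n -> 'I_n -> R[i]) :
  simple_graph e -> is_tree e -> is_T_gain e phi -> is_T_gain e psi ->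
  cospectral (gain_adj e phi) (gain_adj e psi).
Proof.
move=> sg tr gp gq z.
by rewrite (tree_charpoly sg tr gp) (tree_charpoly sg tr gq).
Qed.

Theorem theorem3p4 (R : realType) (n : nat) (e : rel 'I_n) :
  simple_graph e -> connected_graph e ->
  (is_tree e <->
     (forall phi psi : 'I_n -> 'I_n -> R[i],
        is_T_gain e phi -> is_T_gain e psi ->
        cospectral (gain_adj e phi) (gain_adj e psi))) /\
  (is_tree e <->
     (forall phi psi : 'I_n -> 'I_n -> R[i],
        is_T_gain e phi -> is_T_gain e psi ->
        forall r : R[i],
          is_spectral_radius (gain_adj e phi) r <->
          is_spectral_radius (gain_adj e psi) r)).
Proof.
move=> sg cg.
have H32 : (forall phi psi : 'I_n -> 'I_n -> R[i],
        is_T_gain e phi -> is_T_gain e psi ->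
        forall r : R[i],
          is_spectral_radius (gain_adj e phi) r <->
          is_spectral_radius (gain_adj e psi) r) -> is_tree e.
  move=> H3; split => // hc.
  case: sg => sym irr; case: cg => n0 conn.
  have [phi [gphi hphi]] := @cycle_gain_radius R _ _ sym irr conn hc.
  have [r hr] := spec_radius_exists (gain_adj e (fun _ _ => (1 : R[i]))) n0.
  apply: (hphi r hr).
  by apply/(H3 phi (fun _ _ => 1) gphi (@one_gain R n e)); exact: hr.
have H12 : is_tree e -> forall phi psi : 'I_n -> 'I_n -> R[i],
        is_T_gain e phi -> is_T_gain e psi ->
        forall r : R[i],
          is_spectral_radius (gain_adj e phi) r <->
          is_spectral_radius (gain_adj e psi) r.
  move=> tr phi psi gp gq; apply: cospectral_radius; exact: tree_cospec.
split; split.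
- by move=> tr phi psi gp gq; apply: tree_cospec.
- move=> H2; apply: H32 => phi psi gp gq; apply: cospectral_radius; exact: H2.
- exact: H12.
- exact: H32.
Qed.
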